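(* Let $\ell>0$ and let $\tilde X$ be distributed as $X\sim N(0,1)$ conditioned on $X>\ell$. Then $\Pr[|\tilde X|>t]\le2\exp(-t^2/K_1^2)$ for every $t>0$, where $K_1=\max\{\sqrt{20},|\ell|\sqrt{10}\}$. *)

(* Defs.v *)
From HB Require Import structures.
From mathcomp Require Import all_boot all_order all_algebra.
From mathcomp Require Import all_classical all_reals all_analysis.
From mathcomp Require Import normal_distribution.
Set Implicit Arguments. Unset Strict Implicit. Unset Printing Implicit Defensive.
Import Order.TTheory GRing.Theory Num.Theory.
Local Open Scope classical_set_scope.
Local Open Scope ring_scope.

Definition stdnormal {R : realType} : set R -> \bar R := normal_prob 0 1.

Definition cond_normal {R : realType} (A B : set R) : R :=
  fine (stdnormal (A `&` B)) / fine (stdnormal B).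

(* Main.v *)
Require Import Defs.
From HB Require Import structures.
From mathcomp Require Import all_boot all_order all_algebra.
From mathcomp Require Import all_classical all_reals all_analysis.
From mathcomp Require Import normal_distribution.
From mathcomp Require Import lra measurable_realfun.
Import Order.TTheory GRing.Theory Num.Theory numFieldNormedType.Exports.
Local Open Scope classical_set_scope.
Local Open Scope ring_scope.

Section S.
Variable R : realType.
Notation mu := (@lebesgue_measure R).
Let phi := (@normal_pdf R 0 1).

Lemma phi_shift (l d x : R) : 0 < l -> 0 <= d -> l <= x ->
  phi (x + d) <= expR (- ((l + d) ^+ 2 - l ^+ 2) / 2) * phi x.
Proof.
move=> l0 d0 lx; rewrite /phi normal_pdfE ?oner_neq0//= mulrCA ler_pM2l.
  2: by apply: normal_peak_gt0; rewrite oner_neq0.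
rewrite /normal_fun -expRD ler_expR !subr0 expr1n. idtac.
rewrite -mulrDl ler_pM2r ?invr_gt0 ?ltr0n //; nra.
Qed.

Lemma derF (d : R) : (fun x : R => x + d)^`()%classic = cst 1.
Proof.
by apply/funext => x; rewrite derive1E deriveD// derive_id derive_cst addr0.
Qed.

Lemma Qshift (l d : R) : 0 < l -> 0 <= d ->
  (\int[mu]_(x in `](l + d)%R, +oo[) (phi x)%:E <=
   (expR (- ((l + d) ^+ 2 - l ^+ 2) / 2))%R%:E * \int[mu]_(x in `]l, +oo[) (phi x)%:E)%E.
Proof.
move=> l0 d0.
have mphi : measurable_fun setT phi by exact: measurable_normal_pdf.
have cphi := @continuous_normal_pdf R 0 1 (oner_neq0 _).
rewrite integral_itv_obnd_cbnd; last first.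
  by apply/measurable_EFinP; exact: measurable_funTS.
rewrite integral_itv_obnd_cbnd; last first.
  by apply/measurable_EFinP; exact: measurable_funTS.
have H := @increasing_ge0_integration_by_substitutiony _ (fun x => x + d) phi l.
rewrite /= in H; rewrite H.
- rewrite derF -ge0_integralZl_EFin//=.
  all: try (by move=> x _; rewrite lee_fin normal_pdf_ge0).
  all: try (by apply/measurable_EFinP; exact: measurable_funTS).
  all: try exact: expR_ge0.
  apply: ge0_le_integral => //=.
  + by move=> x _; rewrite lee_fin mulr1 normal_pdf_ge0.
  + apply/measurable_EFinP; apply: measurable_funTS; apply: measurable_funM => //.
    apply: measurableT_comp => //; exact: measurable_funD.
  + apply: measurable_funeM; apply/measurable_EFinP; exact: measurable_funTS.
  + move=> x; rewrite /= in_itv/= andbT => lx.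
    by rewrite lee_fin mulr1; apply: phi_shift.
- by move=> x y _ _; rewrite ltrD2r.
- by rewrite derF => x _; exact: cvg_cst.
- by rewrite derF; exact: is_cvg_cst.
- by rewrite derF; exact: is_cvg_cst.
- split; first by move=> x _; exact: derivableD.
  apply: cvg_at_right_filter; apply: cvgD; [exact: cvg_id | exact: cvg_cst].
- exact: cvg_addrr.
- by apply: continuous_subspaceT.
- by move=> x _; exact: normal_pdf_ge0.
Qed.

Lemma qprop (a : R) : (normal_prob (R:=R) 0 1 `]a, +oo[ =
   (fine (normal_prob (R:=R) 0 1 `]a, +oo[))%:E) /\
   0 <= fine (normal_prob (R:=R) 0 1 `]a, +oo[).
Proof.
have h0 : (0 <= normal_prob (R:=R) 0 1 `]a, +oo[)%E by exact: measure_ge0.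
have h1 : (normal_prob (R:=R) 0 1 `]a, +oo[ <= 1)%E by exact: probability_le1.
have hf : normal_prob (R:=R) 0 1 `]a, +oo[ \is a fin_num.
  by rewrite ge0_fin_numE// (le_lt_trans h1)// ltry.
by split; [rewrite fineK | exact: fine_ge0].
Qed.

Lemma ratio_le1 (x : R) : 0 <= x -> x / x <= 1.
Proof. by move=> _; have [->|x0] := eqVneq x 0; [rewrite mul0r|rewrite divff]. Qed.

End S.
Arguments qprop {R}. Arguments ratio_le1 {R} {x}. Arguments Qshift {R}.

Theorem lemma17 (R : realType) (l : R) (hl : 0 < l) (t : R) (ht : 0 < t) :
  cond_normal [set x : R | t < `|x|] [set x : R | l < x]
  <= 2 * expR (- (t ^+ 2) / (Num.max (Num.sqrt 20) (`|l| * Num.sqrt 10)) ^+ 2).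
Proof.
rewrite /cond_normal /stdnormal.
set K := Num.max _ _.
have s20 : 0 <= Num.sqrt 20 :> R by exact: sqrtr_ge0.
have s10 : 0 <= Num.sqrt 10 :> R by exact: sqrtr_ge0.
have e20 : Num.sqrt 20 ^+ 2 = 20 :> R by rewrite sqr_sqrtr.
have e10 : Num.sqrt 10 ^+ 2 = 10 :> R by rewrite sqr_sqrtr.
have K1 : Num.sqrt 20 <= K by rewrite le_max lexx.
have K2 : l * Num.sqrt 10 <= K by rewrite le_max gtr0_norm// lexx orbT.
have KK1 : 20 <= K ^+ 2 by nra.
have KK2 : 10 * l ^+ 2 <= K ^+ 2.
  have lsp : 0 <= l * Num.sqrt 10 by rewrite mulr_ge0// ltW.
  have h : (l * Num.sqrt 10) ^+ 2 = 10 * l ^+ 2 by rewrite exprMn e10 mulrC.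
  rewrite -h; nra.
have Kp : 0 < K ^+ 2 by lra.
set v := (K ^+ 2)^-1.
have vp : 0 < v by rewrite invr_gt0.
have vK : v * K ^+ 2 = 1 by rewrite mulVf// gt_eqF.
have v20 : v * 20 <= 1 by nra.
have v10 : v * (10 * l ^+ 2) <= 1 by nra.
have -> : - t ^+ 2 / K ^+ 2 = - (t ^+ 2 * v) by rewrite mulNr.
have setB : [set x : R | l < x] = `]l, +oo[%classic.
  by apply/seteqP; split => x /=; rewrite in_itv/= andbT.
rewrite setB.
have [tl|lt] := leP t l.
  have -> : [set x : R | t < `|x|] `&` `]l, +oo[ = `]l, +oo[%classic.
    apply/seteqP; split => x /=; rewrite in_itv/= andbT; first by case.
    move=> lx; split => //; rewrite gtr0_norm ?(lt_trans hl lx)//.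
    exact: le_lt_trans tl lx.
  apply: (le_trans (ratio_le1 (qprop l).2)).
  have := expR_ge1Dx (- (t ^+ 2 * v)).
  have : t ^+ 2 <= l ^+ 2 by nra.
  nra.
have -> : [set x : R | t < `|x|] `&` `]l, +oo[ = `](l + (t - l))%R, +oo[%classic.
  apply/seteqP; split => x /=; rewrite !in_itv/= !andbT addrC subrK.
    by case=> tx lx; rewrite gtr0_norm ?(lt_trans hl lx) in tx.
  move=> tx; split; last exact: lt_trans lt tx.
  by rewrite gtr0_norm// (lt_trans ht).
have hQ : (normal_prob (R:=R) 0 1 `](l + (t - l))%R, +oo[ <=
    (expR (- ((l + (t - l)) ^+ 2 - l ^+ 2) / 2))%:E * normal_prob (R:=R) 0 1 `]l, +oo[)%E.
  have d0 : 0 <= t - l by rewrite subr_ge0 ltW.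
  exact: (Qshift l (t - l) hl d0).
have [Et _] := qprop (l + (t - l)).
have [El ql] := qprop l.
rewrite Et El -EFinM lee_fin addrC subrK in hQ.
have hc : expR (- (t ^+ 2 - l ^+ 2) / 2) <= 2 * expR (- (t ^+ 2 * v)).
  have h1 : - (t ^+ 2 - l ^+ 2) / 2 <= - (t ^+ 2 * v) + 1 / 10.
    have := mulr_ge0 (_ : 0 <= t ^+ 2 - l ^+ 2) (_ : 0 <= 1 / 2 - v).
    nra.
  have h2 : expR (1 / 10) <= 2 :> R.
    have := expR_ge1Dx (- (1 / 10) : R).
    have : expR (1 / 10) * expR (- (1 / 10)) = 1 :> R by rewrite -expRD subrr expR0.
    have := expR_gt0 (1 / 10 : R).
    nra.
  apply: (le_trans (_ : _ <= expR (- (t ^+ 2 * v) + 1 / 10))); first by rewrite ler_expR.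
  rewrite expRD mulrC ler_pM2r ?expR_gt0//.
have [q0|qn0] := eqVneq (fine (normal_prob (R:=R) 0 1 `]l, +oo[)) 0.
  by rewrite q0 invr0 mulr0 mulr_ge0 ?expR_ge0.
rewrite ler_pdivrMr ?lt_def ?qn0 ?ql//.
rewrite addrC subrK; apply: (le_trans hQ); rewrite ler_pM2r ?lt_def ?qn0 ?ql//.
Qed.
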